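(* Let $\mathcal H$ be a Hilbert space of finite dimension $N$, and let $\lambda\mapsto \hat H(\lambda)$ ($\lambda\in\mathbb R$) be a family of Hermitian operators on $\mathcal H$. Let $\lambda:[0,\tau]\to\mathbb R$, $t\mapsto\lambda_t$, be a protocol (regular enough for the equation below to have a solution), and let $U_t$ be the unitary evolution defined by $$ i\hbar\,\frac{\partial}{\partial t}U_t=\hat H(\lambda_t)\,U_t,\qquad U_0=\mathbb 1 .$$ For each $\lambda$, let $\{|\psi_k^\lambda\rangle\}_{k=1}^N$ be an orthonormal eigenbasis of $\hat H(\lambda)$, $\hat H(\lambda)|\psi_k^\lambda\rangle=\varepsilon_k(\lambda)|\psi_k^\lambda\rangle$, labelled so that $\varepsilon_k(\lambda_t)\ge\varepsilon_m(\lambda_t)$ whenever $k>m$, for all $t\in[0,\tau]$ (degeneracies are allowed). For $k\in\{1,\dots,N\}$ let $$A_k(\lambda)=\{q\in\{1,\dots,N\}:\ \varepsilon_q(\lambda)=\varepsilon_k(\lambda)\},\qquad g_k(\lambda)=\operatorname{card}A_k(\lambda),$$ $$\mathcal N_k(\lambda)=\Big[\prod_{q\in A_k(\lambda)} q\Big]^{1/g_k(\lambda)},\qquad \hat S(\lambda)=\sum_{k=1}^N \ln\mathcal N_k(\lambda)\,|\psi_k^\lambda\rangle\langle\psi_k^\lambda| .$$ Suppose there is a probability distribution $\{p_k\}_{k=1}^N$ such that $p_k=p_m$ for all $k,m$ with $m\in A_k(\lambda_0)$, $p_k\le p_m$ whenever $k>m$, and the initial state is $$\rho(0)=\sum_{k=1}^N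 p_k\,|\psi_k^{\lambda_0}\rangle\langle\psi_k^{\lambda_0}| .$$ Let $\rho(t)=U_t\rho(0)U_t^\dagger$ and $S(t)=\operatorname{Tr}\big[\rho(t)\,\hat S(\lambda_t)\big]$. Then $$S(\tau)\ge S(0).$$
   Context: $\hat S(\lambda)$ is called the (quantum) volume entropy operator; $\mathcal N_k(\lambda)$ is the geometric mean of the labels in the degenerate set $A_k(\lambda)$, so that $\ln\mathcal N_k(\lambda)$ is the arithmetic mean of $\ln q$ over $q\in A_k(\lambda)$. In the non-degenerate case $\mathcal N_k(\lambda)=k$. *)

(* Defs.v *)
From HB Require Import structures.
From mathcomp Require Import all_boot all_order all_algebra.
From mathcomp Require Import all_classical all_reals all_analysis.
From mathcomp Require Import complex.
Set Implicit Arguments. Unset Strict Implicit. Unset Printing Implicit Defensive.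
Import Order.TTheory GRing.Theory Num.Theory.
Import numFieldNormedType.Exports.
Local Open Scope ring_scope.
Local Open Scope sesquilinear_scope.
Local Open Scope classical_set_scope.

Section Defs.
Variable R : realType.
Local Notation C := (R[i]).

Definition RtoC (x : R) : C := Complex x 0.

Definition hermitian_mx n (A : 'M[C]_n) : Prop := A ^t* = A.

Definition ketbra n (v : 'cV[C]_n) : 'M[C]_n := v *m v ^t*.

Definition mx_is_derive m n (U : R -> 'M[C]_(m, n)) (t : R) (D : 'M[C]_(m, n))
  : Prop :=
  forall i j, is_derive t 1 (fun s => complex.Re (U s i j)) (complex.Re (D i j)) /\
              is_derive t 1 (fun s => complex.Im (U s i j)) (complex.Im (D i j)).

Definition mx_continuous_on m n (U : R -> 'M[C]_(m, n)) (a b : R) : Prop :=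
  forall i j, {within `[a, b], continuous (fun s : R => complex.Re (U s i j))} /\
              {within `[a, b], continuous (fun s : R => complex.Im (U s i j))}.

(* Degenerate set A_k = {q : eps q = eps k}; labels q : 'I_N stand for q+1
   in {1,...,N}. *)
Definition degset N (eps : 'I_N -> R) (k : 'I_N) : {set 'I_N} :=
  [set q | eps q == eps k].

Definition gdeg N (eps : 'I_N -> R) (k : 'I_N) : nat := #|degset eps k|.

Definition geomN N (eps : 'I_N -> R) (k : 'I_N) : R :=
  (\prod_(q in degset eps k) (q.+1)%:R) `^ ((gdeg eps k)%:R)^-1.

Definition Shat N (eps : 'I_N -> R) (psi : 'I_N -> 'cV[C]_N) : 'M[C]_N :=
  \sum_(k < N) RtoC (ln (geomN eps k)) *: ketbra (psi k).

End Defs.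

(* Main.v *)
Require Import Defs.
Set Warnings "-all".
From HB Require Import structures.
From mathcomp Require Import all_boot all_order all_algebra.
From mathcomp Require Import all_classical all_reals all_analysis.
From mathcomp Require Import complex.
From mathcomp Require Import zify ring lra.
Import Order.TTheory GRing.Theory Num.Theory.
Import numFieldNormedType.Exports.
Local Open Scope ring_scope.
Local Open Scope sesquilinear_scope.
Section RealPart.
Variable R : realType.
Set Implicit Arguments.

Lemma split_tail N (F : 'I_N -> R) (j : nat) :
  \sum_(q < N | (j <= q)%N) F q =
  \sum_(q < N | j == q :> nat) F q + \sum_(q < N | (j.+1 <= q)%N) F q.
Proof.
rewrite (bigID (fun q : 'I_N => j == q :> nat)) /=; congr (_ + _).
  by apply: eq_bigl => q; case: eqP => [->|]; rewrite ?leqnn ?andbF.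
by apply: eq_bigl => q; rewrite ltn_neqAle andbC.
Qed.

Lemma abel N (a : nat -> R) (x : 'I_N -> R) :
  (forall m n, (m <= n)%N -> a m <= a n) ->
  (forall j, 0 <= \sum_(q < N | (j <= q)%N) x q) ->
  forall j, a j * \sum_(q < N | (j <= q)%N) x q <=
            \sum_(q < N | (j <= q)%N) a q * x q.
Proof.
move=> amono tail.
suff H : forall k j, (N - j <= k)%N ->
  a j * \sum_(q < N | (j <= q)%N) x q <= \sum_(q < N | (j <= q)%N) a q * x q.
  by move=> j; apply: (H (N - j)%N).
elim=> [|k IH] j hj.
  have hq : forall q : 'I_N, (j <= q)%N = false.
    move=> q; apply/negbTE; rewrite -ltnNge.
    by apply: (leq_trans (ltn_ord q)); rewrite -subn_eq0 -leqn0.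
  by rewrite !big_pred0 ?mulr0.
have hj' : (N - j.+1 <= k)%N by rewrite subnS -subn1 leq_subLR add1n.
have IH' := IH j.+1 hj'.
rewrite split_tail [X in _ <= X]split_tail mulrDr.
apply: lerD.
  rewrite big_distrr /= [X in X <= _](eq_bigr (fun q : 'I_N => a q * x q)) //.
  by move=> q /eqP ->.
apply: le_trans IH'; apply: ler_wpM2r; first exact: tail.
exact: amono.
Qed.

Lemma tail_maj N (D : 'I_N -> 'I_N -> R) (p : 'I_N -> R) :
  (forall q m, 0 <= D q m) ->
  (forall q, \sum_m D q m = 1) ->
  (forall m, \sum_q D q m = 1) ->
  (forall k m : 'I_N, (m < k)%N -> p k <= p m) ->
  forall j, \sum_(q < N | (j <= q)%N) p q <=
            \sum_(q < N | (j <= q)%N) \sum_m D q m * p m.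
Proof.
move=> D0 Drow Dcol pdec j.
case: (ltnP j N) => hj; last first.
  rewrite !big_pred0 // => q; apply/negbTE; have := ltn_ord q; lia.
pose t := p (Ordinal hj).
pose c m := \sum_(q < N | (j <= q)%N) D q m.
pose ind (m : 'I_N) : R := (j <= m)%N%:R.
have E1 : \sum_(q < N | (j <= q)%N) \sum_m D q m * p m = \sum_m c m * p m.
  rewrite exchange_big /=; apply: eq_bigr => m _; rewrite /c mulr_suml //.
have E2 : \sum_(q < N | (j <= q)%N) p q = \sum_m ind m * p m.
  rewrite big_mkcond /=; apply: eq_bigr => m _; rewrite /ind.
  by case: (j <= m)%N; rewrite ?mul1r ?mul0r.
have E3 : \sum_m c m = \sum_m ind m.
  rewrite /c exchange_big /=.
  transitivity (\sum_(q < N | (j <= q)%N) (1 : R)).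
    by apply: eq_bigr => q _; rewrite Drow.
  rewrite big_mkcond /=; apply: eq_bigr => m _; rewrite /ind.
  by case: (j <= m)%N.
rewrite E1 E2 -subr_ge0 -sumrB.
have -> : \sum_m (c m * p m - ind m * p m) =
   \sum_m (c m - ind m) * (p m - t) + t * (\sum_m c m - \sum_m ind m).
  rewrite -sumrB mulr_sumr -big_split /=; apply: eq_bigr => m _; ring.
rewrite E3 subrr mulr0 addr0; apply: sumr_ge0 => m _.
have c0 : 0 <= c m by apply: sumr_ge0 => q _.
have c1 : c m <= 1.
  rewrite -(Dcol m) /c [X in _ <= X](bigID (fun q : 'I_N => (j <= q)%N)) /=.
  by rewrite lerDl; apply: sumr_ge0 => q _.
rewrite /ind; case: (leqP j m) => hjm /=.
  have : p m <= t.
    rewrite /t; case: (ltnP j m) => h2; first exact: pdec.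
    have -> : m = Ordinal hj by apply: val_inj => /=; lia.
    done.
  move=> hpt; apply: mulr_le0; lra.
have : t <= p m by apply: pdec.
move=> hpt; apply: mulr_ge0; lra.
Qed.

Lemma majorize N (a : nat -> R) (D : 'I_N -> 'I_N -> R) (p : 'I_N -> R) :
  a 0%N = 0 ->
  (forall m n, (m <= n)%N -> a m <= a n) ->
  (forall q m, 0 <= D q m) ->
  (forall q, \sum_m D q m = 1) ->
  (forall m, \sum_q D q m = 1) ->
  (forall k m : 'I_N, (m < k)%N -> p k <= p m) ->
  \sum_(q < N) a q * p q <= \sum_(q < N) a q * \sum_m D q m * p m.
Proof.
move=> a0 amono D0 Drow Dcol pdec.
have Ht : forall j, 0 <= \sum_(q < N | (j <= q)%N) (\sum_m D q m * p m - p q).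
  by move=> j; rewrite sumrB subr_ge0; apply: tail_maj.
have := @abel N a (fun q => \sum_m D q m * p m - p q) amono Ht 0%N.
rewrite a0 mul0r => H.
rewrite -subr_ge0 -sumrB; apply: le_trans H _.
rewrite le_eqVlt; apply/orP; left; apply/eqP.
by apply: eq_big => // q _; rewrite mulrBr.
Qed.
End RealPart.
Section Block.
Variable R : realType.
Set Implicit Arguments.

Lemma ln_prod_nat (I : Type) (A : pred I) (s : seq I) (f : I -> nat) :
  ln (\prod_(q <- s | A q) ((f q).+1)%:R : R) = \sum_(q <- s | A q) ln (((f q).+1)%:R : R).
Proof.
suff [_ ->] : 0 < (\prod_(q <- s | A q) ((f q).+1)%:R : R) /\
  ln (\prod_(q <- s | A q) ((f q).+1)%:R : R) = \sum_(q <- s | A q) ln (((f q).+1)%:R : R) by [].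
apply: (big_rec2 (fun (s : R) y => 0 < y /\ ln y = s)).
  by split; [exact: ltr01 | exact: ln1].
move=> q s1 y _ [y0 hy]; split; first by rewrite mulr_gt0 // ltr0n.
by rewrite lnM ?posrE ?ltr0n // hy.
Qed.

Lemma ln_geomN N (e : 'I_N -> R) k :
  ln (geomN e k) = (gdeg e k)%:R^-1 * \sum_(q in degset e k) ln ((q.+1)%:R : R).
Proof.
rewrite /geomN ln_powR; congr (_ * _).
exact: (@ln_prod_nat _ (fun q => q \in degset e k) _ (@nat_of_ord N)).
Qed.

Definition Bm N (e : 'I_N -> R) (q k : 'I_N) : R :=
  (k \in degset e q)%:R / (gdeg e q)%:R.

Lemma gdeg_pos N (e : 'I_N -> R) k : (0 < gdeg e k)%N.
Proof. by apply/card_gt0P; exists k; rewrite inE. Qed.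

Lemma Bsym N (e : 'I_N -> R) q k :
  (q \in degset e k)%:R / (gdeg e k)%:R = Bm e q k.
Proof.
rewrite /Bm !inE; case: (e q =P e k) => h.
  have -> : (e k == e q) by rewrite h.
  congr (_ / _%:R); rewrite /gdeg /degset; apply: eq_card => r.
  by rewrite !inE h.
have -> : (e k == e q) = false by apply/eqP => h'; apply: h; rewrite h'.
by rewrite !mul0r.
Qed.

Lemma blockE N (e : 'I_N -> R) (x : 'I_N -> R) :
  \sum_k x k * ln (geomN e k) =
  \sum_(q < N) ln ((q.+1)%:R : R) * \sum_k Bm e q k * x k.
Proof.
transitivity (\sum_k \sum_(q < N)
   (q \in degset e k)%:R / (gdeg e k)%:R * x k * ln ((q.+1)%:R : R)).
  apply: eq_bigr => k _; rewrite ln_geomN big_mkcond /= !mulr_sumr.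
  by apply: eq_bigr => q _; case: (q \in degset e k) => /=; ring.
rewrite exchange_big /=; apply: eq_bigr => q _; rewrite mulr_sumr.
by apply: eq_bigr => k _; rewrite Bsym; ring.
Qed.

Lemma sum_ind N (A : {set 'I_N}) : \sum_k (k \in A)%:R = (#|A|%:R : R).
Proof.
transitivity (\sum_(k in A) (1:R)); last by rewrite sumr_const.
rewrite [RHS]big_mkcond /=; apply: eq_bigr => k _.
by case: (k \in A).
Qed.

Lemma Brow N (e : 'I_N -> R) q : \sum_k Bm e q k = 1.
Proof.
rewrite /Bm -mulr_suml sum_ind mulfV // pnatr_eq0 -lt0n; exact: gdeg_pos.
Qed.

Lemma Bcol N (e : 'I_N -> R) k : \sum_q Bm e q k = 1.
Proof.
rewrite -(Brow e k); apply: eq_bigr => q _; by rewrite -Bsym.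
Qed.

Lemma B0 N (e : 'I_N -> R) q k : 0 <= Bm e q k.
Proof. by rewrite /Bm divr_ge0 ?ler0n. Qed.

Lemma Bconst N (e : 'I_N -> R) (p : 'I_N -> R) :
  (forall k m : 'I_N, m \in degset e k -> p k = p m) ->
  forall q, \sum_k Bm e q k * p k = p q.
Proof.
move=> hp q.
transitivity (\sum_k Bm e q k * p q).
  apply: eq_bigr => k _; rewrite /Bm; case hk: (k \in degset e q).
    by rewrite (hp q k hk).
  by rewrite !mul0r.
by rewrite -mulr_suml Brow mul1r.
Qed.
End Block.
Section Mx.
Variable R : realType.
Set Implicit Arguments.
Local Notation C := (R[i]).

Lemma trS N (M : 'M[C]_N) (e : 'I_N -> R) (f : 'I_N -> 'cV[C]_N) :
  \tr (M *m Shat e f) = \sum_k RtoC (ln (geomN e k)) * (f k ^t* *m M *m f k) 0 0.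
Proof.
rewrite /Shat mulmx_sumr raddf_sum; apply: eq_bigr => k _.
rewrite -scalemxAr.
rewrite [LHS]/= mxtraceZ /ketbra mulmxA mxtrace_mulC mulmxA trace_mx11.
done.
Qed.

Lemma complete N (f : 'I_N -> 'cV[C]_N) :
  (forall k m, f k ^t* *m f m = (k == m)%:R%:M) ->
  \sum_k f k *m f k ^t* = 1%:M.
Proof.
move=> orth.
pose P : 'M[C]_N := \matrix_(i, k) f k i 0.
have h1 : P ^t* *m P = 1%:M.
  apply/matrixP => k m.
  have := congr1 (fun A : 'M[C]_1 => A 0 0) (orth k m).
  rewrite !mxE /= mulr1n => <-.
  by apply: eq_bigr => i _; rewrite !mxE.
have h2 := mulmx1C h1.
rewrite -h2; apply/matrixP => i j; rewrite summxE !mxE; apply: eq_bigr => k _.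
by rewrite !mxE big_ord1 !mxE.
Qed.
End Mx.
Section Cont.
Variable R : realType.
Set Implicit Arguments.
Local Notation C := (R[i]).
Local Open Scope classical_set_scope.

Lemma within_contM (A : set R) (f g : R -> R) :
  {within A, continuous f} -> {within A, continuous g} ->
  {within A, continuous (fun s => f s * g s)}.
Proof. move=> hf hg x; exact: (continuousM (hf x) (hg x)). Qed.

Lemma within_contS (A : set R) n (f : 'I_n -> R -> R) :
  (forall k, {within A, continuous f k}) ->
  {within A, continuous (fun s => \sum_k f k s)}.
Proof.
move=> hf; rewrite -fct_sumE.
apply: (big_ind (fun h : R -> R => {within A, continuous h})) => //.
  move=> x; exact: cst_continuous.
by move=> h1 h2 c1 c2; apply: within_continuousD.
Qed.

Lemma Re_conjM (a b : C) :
  complex.Re (a^* * b) = complex.Re a * complex.Re b + complex.Im a * complex.Im b.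
Proof. by case: a => a1 a2; case: b => b1 b2; simpc. Qed.

Lemma Im_conjM (a b : C) :
  complex.Im (a^* * b) = complex.Re a * complex.Im b - complex.Im a * complex.Re b.
Proof. by case: a => a1 a2; case: b => b1 b2; simpc. Qed.

Lemma ReD (x y : C) : complex.Re (x + y) = complex.Re x + complex.Re y.
Proof. by case: x; case: y. Qed.
Lemma ImD (x y : C) : complex.Im (x + y) = complex.Im x + complex.Im y.
Proof. by case: x; case: y. Qed.

Lemma Re_sum n (F : 'I_n -> C) : complex.Re (\sum_k F k) = \sum_k complex.Re (F k).
Proof. exact: (big_morph _ ReD). Qed.

Lemma Im_sum n (F : 'I_n -> C) : complex.Im (\sum_k F k) = \sum_k complex.Im (F k).
Proof. exact: (big_morph _ ImD). Qed.
End Cont.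
Section Deriv.
Variable R : realType.
Set Implicit Arguments.
Local Notation C := (R[i]).
Local Open Scope classical_set_scope.

Lemma deriv_conjmul (u v : R -> C) (x : R) (du dv : C) :
  is_derive x 1 (fun s => complex.Re (u s)) (complex.Re du) ->
  is_derive x 1 (fun s => complex.Im (u s)) (complex.Im du) ->
  is_derive x 1 (fun s => complex.Re (v s)) (complex.Re dv) ->
  is_derive x 1 (fun s => complex.Im (v s)) (complex.Im dv) ->
  is_derive x 1 (fun s => complex.Re ((u s)^* * v s))
     (complex.Re (du^* * v x + (u x)^* * dv)) /\
  is_derive x 1 (fun s => complex.Im ((u s)^* * v s))
     (complex.Im (du^* * v x + (u x)^* * dv)).
Proof.
move=> ur ui vr vi.
have eR : (fun s => complex.Re ((u s)^* * v s)) =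
  (fun s => complex.Re (u s)) * (fun s => complex.Re (v s)) +
  (fun s => complex.Im (u s)) * (fun s => complex.Im (v s)).
  by apply: funext => s /=; rewrite Re_conjM.
have eI : (fun s => complex.Im ((u s)^* * v s)) =
  (fun s => complex.Re (u s)) * (fun s => complex.Im (v s)) -
  (fun s => complex.Im (u s)) * (fun s => complex.Re (v s)).
  by apply: funext => s /=; rewrite Im_conjM.
split.
  rewrite eR; apply: is_derive_eq (is_deriveD (is_deriveM ur vr) (is_deriveM ui vi)) _.
  rewrite ReD !Re_conjM /=.
  rewrite /GRing.scale /=; ring.
rewrite eI; apply: is_derive_eq (is_deriveB (is_deriveM ur vi) (is_deriveM ui vr)) _.
rewrite ImD !Im_conjM /=.
rewrite /GRing.scale /=; ring.
Qed.
End Deriv.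
Section Unit.
Variable R : realType.
Set Implicit Arguments.
Local Notation C := (R[i]).
Local Open Scope classical_set_scope.

Lemma trC_scale m n (a : C) (A : 'M[C]_(m, n)) : (a *: A)^t* = a^* *: A^t*.
Proof. by apply/matrixP => i j; rewrite !mxE rmorphM. Qed.

Lemma trC_mul m n p (A : 'M[C]_(m, n)) (B : 'M[C]_(n, p)) : (A *m B)^t* = B^t* *m A^t*.
Proof. by rewrite trmx_mul map_mxM. Qed.

Lemma const_deriv0 (tau : R) (g : R -> R) : 0 < tau ->
  {within `[0, tau], continuous g} ->
  (forall x, x \in `]0, tau[%R -> is_derive x 1 g 0) -> g tau = g 0.
Proof.
move=> tpos hc hd; have [c _] := MVT tpos hd hc.
by rewrite mul0r => /eqP; rewrite subr_eq0 => /eqP.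
Qed.

Lemma Zeq0 N (c : C) (Hm U D : 'M[C]_N) :
  c != 0 -> c^* = - c -> Hm^t* = Hm -> c *: D = Hm *m U ->
  D^t* *m U + U^t* *m D = 0.
Proof.
move=> cne0 cc herm hDe.
have eD : D = c^-1 *: (Hm *m U) by rewrite -hDe scalerA mulVf // scale1r.
have cc' : (c^-1)^* = - c^-1.
  have -> : (c^-1)^* = (c^*)^-1 by exact: fmorphV.
  by rewrite cc invrN.
rewrite eD trC_scale trC_mul herm cc' -scalemxAl -scalemxAr mulmxA scaleNr.
by rewrite addNr.
Qed.

Lemma unitary_evol N (hbar tau : R) (H : R -> 'M[C]_N) (lam : R -> R)
  (U : R -> 'M[C]_N) :
  0 < hbar -> 0 <= tau -> (forall l, hermitian_mx (H l)) -> U 0 = 1%:M ->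
  mx_continuous_on U 0 tau ->
  (forall t, 0 < t < tau -> exists D,
     mx_is_derive U t D /\ (Complex 0 1 * RtoC hbar) *: D = H (lam t) *m U t) ->
  (U tau)^t* *m U tau = 1%:M.
Proof.
move=> hb htau herm U0 Ucont Uder.
have F0 : (U 0)^t* *m U 0 = 1%:M by rewrite U0 trmx1 map_mx1 mulmx1.
rewrite -F0.
case: (eqVneq tau 0) => [-> //| tne0].
have tpos : 0 < tau by rewrite lt_neqAle eq_sym tne0.
have Zeq : forall t, 0 < t < tau -> exists D,
    mx_is_derive U t D /\ D^t* *m U t + (U t)^t* *m D = 0.
  move=> t ht; have [D [hD hDe]] := Uder t ht; exists D; split => //.
  apply: (Zeq0 _ _ (herm (lam t)) hDe).
    apply/eqP => /(congr1 (@complex.Im R)) /=; rewrite /RtoC /=.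
    by rewrite mul0r mul1r add0r => h0; move: hb; rewrite h0 ltxx.
  rewrite /RtoC; apply/eqP; rewrite eq_complex /=.
  by rewrite !mul0r !mul1r !subr0 oppr0 !eqxx.
apply/matrixP => i j.
have entry : forall (A B : 'M[C]_N), (A^t* *m B) i j = \sum_k (A k i)^* * B k j.
  by move=> A B; rewrite !mxE; apply: eq_bigr => k _; rewrite !mxE.
have hder : forall x, x \in `]0, tau[%R -> exists D, mx_is_derive U x D /\
    \sum_k ((D k i)^* * U x k j + (U x k i)^* * D k j) = 0.
  move=> x; rewrite in_itv /= => hx; have [D [hD hZ]] := Zeq x hx.
  exists D; split => //; have := congr1 (fun M : 'M[C]_N => M i j) hZ.
  rewrite mxE !entry -big_split /= => ->; by rewrite mxE.
apply/eqP; rewrite eq_complex; apply/andP; split; apply/eqP.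
  rewrite !entry !Re_sum.
  apply: (@const_deriv0 tau (fun s => \sum_k complex.Re ((U s k i)^* * U s k j))) tpos _ _.
    apply: within_contS => k.
    have -> : (fun s => complex.Re ((U s k i)^* * U s k j)) =
      (fun s => complex.Re (U s k i) * complex.Re (U s k j)) +
      (fun s => complex.Im (U s k i) * complex.Im (U s k j)).
      by apply: funext => s /=; rewrite Re_conjM.
    apply: within_continuousD; apply: within_contM;
      by [exact: (Ucont k i).1 | exact: (Ucont k i).2 | exact: (Ucont k j).1 | exact: (Ucont k j).2].
  move=> x hx; have [D [hD hz]] := hder x hx.
  have hk : forall k, is_derive x 1 (fun s => complex.Re ((U s k i)^* * U s k j))
     (complex.Re ((D k i)^* * U x k j + (U x k i)^* * D k j)).
    move=> k; exact: (@deriv_conjmul R (fun s => U s k i) (fun s => U s k j) x (D k i) (D k j) (hD k i).1 (hD k i).2 (hD k j).1 (hD k j).2).1.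
  have := is_derive_sum hk; rewrite fct_sumE => h; apply: is_derive_eq h _.
  by rewrite -Re_sum hz.
rewrite !entry !Im_sum.
apply: (@const_deriv0 tau (fun s => \sum_k complex.Im ((U s k i)^* * U s k j))) tpos _ _.
  apply: within_contS => k.
  have -> : (fun s => complex.Im ((U s k i)^* * U s k j)) =
    (fun s => complex.Re (U s k i) * complex.Im (U s k j)) +
    (fun s => ((-1) * complex.Im (U s k i)) * complex.Re (U s k j)).
    apply: funext => s; rewrite Im_conjM.
    by rewrite [RHS]/GRing.add /= mulN1r mulNr.
  have hc1 : {within `[0, tau], continuous (fun _ : R => (-1 : R))}.
    move=> x; exact: cst_continuous.
  apply: within_continuousD; apply: within_contM;
    try apply: within_contM;
    by [exact: hc1 | exact: (Ucont k i).1 | exact: (Ucont k i).2 | exact: (Ucont k j).1 | exact: (Ucont k j).2].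
move=> x hx; have [D [hD hz]] := hder x hx.
have hk : forall k, is_derive x 1 (fun s => complex.Im ((U s k i)^* * U s k j))
   (complex.Im ((D k i)^* * U x k j + (U x k i)^* * D k j)).
  move=> k; exact: (@deriv_conjmul R (fun s => U s k i) (fun s => U s k j) x (D k i) (D k j) (hD k i).1 (hD k i).2 (hD k j).1 (hD k j).2).2.
have := is_derive_sum hk; rewrite fct_sumE => h; apply: is_derive_eq h _.
by rewrite -Im_sum hz.
Qed.
End Unit.
Section Assembly.
Variable R : realType.
Set Implicit Arguments.
Local Notation C := (R[i]).

Lemma sandwich N (A : 'M[C]_(1, N)) (B : 'M[C]_(N, 1)) (p : 'I_N -> R)
  (f : 'I_N -> 'cV[C]_N) :
  A *m (\sum_m RtoC (p m) *: ketbra (f m)) *m B =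
  \sum_m RtoC (p m) *: ((A *m f m) *m (f m ^t* *m B)).
Proof.
rewrite mulmx_sumr mulmx_suml; apply: eq_bigr => m _.
by rewrite /ketbra -scalemxAr -scalemxAl !mulmxA.
Qed.

Lemma resolve N (f : 'I_N -> 'cV[C]_N) (A : 'M[C]_(1, N)) (B : 'M[C]_(N, 1)) :
  (forall k m, f k ^t* *m f m = (k == m)%:R%:M) ->
  \sum_m (A *m f m) *m (f m ^t* *m B) = A *m B.
Proof.
move=> orth; transitivity (A *m (\sum_m f m *m f m ^t*) *m B).
  by rewrite mulmx_sumr mulmx_suml; apply: eq_bigr => m _; rewrite !mulmxA.
by rewrite complete // mulmx1.
Qed.

Lemma mx11M (a b : 'M[C]_1) : (a *m b) 0 0 = a 0 0 * b 0 0.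
Proof. by rewrite mxE big_ord1. Qed.

Lemma trC00 m (a : 'M[C]_(1, m)) (b : 'M[C]_(m, 1)) : (b^t* *m a^t*) 0 0 = ((a *m b) 0 0)^*.
Proof. by rewrite -trC_mul !mxE. Qed.

Lemma trCE m n (A : 'M[C]_(m, n)) i j : (A^t*) i j = (A j i)^*.
Proof. by rewrite !mxE. Qed.

Lemma RtoC_sum n (F : 'I_n -> R) : RtoC (\sum_k F k) = \sum_k RtoC (F k).
Proof. exact: (@rmorph_sum _ _ (real_complex R)). Qed.

Lemma RtoCM (x y : R) : RtoC (x * y) = RtoC x * RtoC y.
Proof. exact: (@rmorphM _ _ (real_complex R)). Qed.
End Assembly.
Theorem theorem2 (R : realType) (N : nat) (hbar tau : R)
  (H : R -> 'M[R[i]]_N) (lam : R -> R) (U : R -> 'M[R[i]]_N)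
  (psi : R -> 'I_N -> 'cV[R[i]]_N) (eps : R -> 'I_N -> R) (p : 'I_N -> R) :
  0 < hbar -> 0 <= tau ->
  (forall l, hermitian_mx (H l)) ->
  (forall l (k m : 'I_N), (psi l k) ^t* *m psi l m = (k == m)%:R%:M) ->
  (forall l k, H l *m psi l k = RtoC (eps l k) *: psi l k) ->
  (forall t, 0 <= t <= tau ->
     forall k m : 'I_N, (m < k)%N -> eps (lam t) m <= eps (lam t) k) ->
  U 0 = 1%:M ->
  mx_continuous_on U 0 tau ->
  (forall t, 0 < t < tau -> exists D,
     mx_is_derive U t D /\ (Complex 0 1 * RtoC hbar) *: D = H (lam t) *m U t) ->
  (forall k, 0 <= p k) -> \sum_(k < N) p k = 1 ->
  (forall k m : 'I_N, m \in degset (eps (lam 0)) k -> p k = p m) ->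
  (forall k m : 'I_N, (m < k)%N -> p k <= p m) ->
  let rho0 := \sum_(k < N) RtoC (p k) *: ketbra (psi (lam 0) k) in
  let rho := fun t => U t *m rho0 *m (U t) ^t* in
  let S := fun t => \tr (rho t *m Shat (eps (lam t)) (psi (lam t))) in
  S 0 <= S tau.
Proof.
move=> hb htau herm orth eig eord U0 Ucont Uder p0 psum pconst pdec.
cbv zeta.
set rho0 := \sum_(k < N) RtoC (p k) *: ketbra (psi (lam 0) k).
have Vu : (U tau)^t* *m U tau = 1%:M := @unitary_evol R N hbar tau H lam U hb htau herm U0 Ucont Uder.
have Vu' := mulmx1C Vu.
pose z k m := ((psi (lam tau) k)^t* *m U tau *m psi (lam 0) m) 0 0.
pose zeta k m := z k m * (z k m)^*.
have S0E : \tr (U 0 *m rho0 *m (U 0)^t* *m Shat (eps (lam 0)) (psi (lam 0)))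
    = RtoC (\sum_k p k * ln (geomN (eps (lam 0)) k)).
  rewrite U0 trmx1 map_mx1 mul1mx mulmx1 trS RtoC_sum.
  apply: eq_bigr => k _; rewrite /rho0 sandwich summxE.
  rewrite (bigD1 k) //= big1 => [|m hm].
    rewrite mxE mx11M !orth !mxE eqxx mulr1n mulr1 addr0 RtoCM mulrC.
    by rewrite /= mulr1.
  rewrite mxE mx11M !orth !mxE (negbTE hm) eq_sym (negbTE hm) /=.
  by rewrite mulr0n mul0r mulr0.
have STE : \tr (U tau *m rho0 *m (U tau)^t* *m Shat (eps (lam tau)) (psi (lam tau)))
    = \sum_k RtoC (ln (geomN (eps (lam tau)) k)) * \sum_m RtoC (p m) * zeta k m.
  rewrite trS; apply: eq_bigr => k _; congr (_ * _).
  rewrite !mulmxA -[_ *m psi (lam tau) k]mulmxA /rho0 sandwich summxE.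
  apply: eq_bigr => m _; rewrite mxE mx11M /zeta /z; congr (_ * (_ * _)).
  have -> : (U tau)^t* *m psi (lam tau) k = ((psi (lam tau) k)^t* *m U tau)^t*.
    by rewrite trC_mul trmxCK.
  by rewrite trC00.
have hz0 : forall k m, 0 <= zeta k m by move=> k m; exact: mul_conjC_ge0.
pose w k m := complex.Re (zeta k m).
have hzw : forall k m, zeta k m = RtoC (w k m).
  move=> k m; have := ger0_Im (hz0 k m); rewrite /w; case: (zeta k m) => a b /= hb'.
  by rewrite /RtoC hb'.
have hw0 : forall k m, 0 <= w k m.
  by move=> k m; move: (hz0 k m); rewrite lecE => /andP [_].
have hrow : forall k, \sum_m zeta k m = 1.
  move=> k.
  transitivity ((((psi (lam tau) k)^t* *m U tau) *m ((U tau)^t* *m psi (lam tau) k)) 0 0).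
    rewrite -(@resolve R N (psi (lam 0)) ((psi (lam tau) k)^t* *m U tau) ((U tau)^t* *m psi (lam tau) k) (orth (lam 0))) summxE; apply: eq_bigr => m _.
    rewrite mx11M /zeta /z; congr (_ * _).
    have -> : (U tau)^t* *m psi (lam tau) k = ((psi (lam tau) k)^t* *m U tau)^t*.
      by rewrite trC_mul trmxCK.
    by rewrite trC00.
  by rewrite mulmxA -(mulmxA _ (U tau)) Vu' mulmx1 orth eqxx mxE /= mulr1n.
have hcol : forall m, \sum_k zeta k m = 1.
  move=> m.
  transitivity ((((psi (lam 0) m)^t* *m (U tau)^t*) *m (U tau *m psi (lam 0) m)) 0 0).
    rewrite -(@resolve R N (psi (lam tau)) ((psi (lam 0) m)^t* *m (U tau)^t*) (U tau *m psi (lam 0) m) (orth (lam tau))) summxE; apply: eq_bigr => k _.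
    rewrite mx11M /zeta /z mulrC; congr (_ * _).
      have -> : psi (lam 0) m ^t* *m U tau ^t* *m psi (lam tau) k =
         (psi (lam tau) k ^t* *m (U tau *m psi (lam 0) m))^t*.
        by rewrite trC_mul trmxCK trC_mul.
      by rewrite trCE mulmxA.
    by rewrite mulmxA.
  by rewrite mulmxA -(mulmxA _ _ (U tau)) Vu mulmx1 orth eqxx mxE /= mulr1n.
have wrow : forall k, \sum_m w k m = 1.
  move=> k; have := hrow k; under eq_bigr => m _ do rewrite hzw.
  by rewrite -RtoC_sum => /(congr1 (@complex.Re R)).
have wcol : forall m, \sum_k w k m = 1.
  move=> m; have := hcol m; under eq_bigr => k _ do rewrite hzw.
  by rewrite -RtoC_sum => /(congr1 (@complex.Re R)).
rewrite S0E STE.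
have -> : \sum_k RtoC (ln (geomN (eps (lam tau)) k)) * \sum_m RtoC (p m) * zeta k m
   = RtoC (\sum_k (\sum_m w k m * p m) * ln (geomN (eps (lam tau)) k)).
  rewrite RtoC_sum; apply: eq_bigr => k _; rewrite RtoCM mulrC RtoC_sum.
  by congr (_ * _); apply: eq_bigr => m _; rewrite RtoCM hzw mulrC.
rewrite /RtoC !complexr0 lecR !blockE.
rewrite [X in X <= _](eq_bigr (fun q : 'I_N => ln ((q.+1)%:R : R) * p q)); last first.
  by move=> q _; rewrite (@Bconst R N _ _ pconst).
pose Dm q m := \sum_k @Bm R N (eps (lam tau)) q k * w k m.
rewrite [X in _ <= X](eq_bigr (fun q : 'I_N => ln ((q.+1)%:R : R) * \sum_m Dm q m * p m)); last first.
  move=> q _; congr (_ * _).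
  transitivity (\sum_k \sum_m @Bm R N (eps (lam tau)) q k * (w k m * p m)).
    by apply: eq_bigr => k _; rewrite mulr_sumr.
  rewrite exchange_big /=; apply: eq_bigr => m _; rewrite /Dm mulr_suml.
  by apply: eq_bigr => k _; rewrite mulrA.
apply: (@majorize R N (fun n : nat => ln ((n.+1)%:R : R)) Dm p).
- by rewrite mulr1n ln1.
- by move=> m n hmn; rewrite ler_ln ?posrE ?ltr0n // ler_nat.
- by move=> q m; apply: sumr_ge0 => k _; rewrite mulr_ge0 // B0.
- move=> q; rewrite /Dm exchange_big /=.
  rewrite (eq_bigr (fun k => @Bm R N (eps (lam tau)) q k)) ?Brow // => k _.
  by rewrite -mulr_sumr wrow mulr1.
- move=> m; rewrite /Dm exchange_big /=.
  rewrite (eq_bigr (fun k => w k m)) ?wcol // => k _.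
  by rewrite -mulr_suml Bcol mul1r.
- exact: pdec.
Qed.
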